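(* Let $G=(V,E)$ be a $2$-edge-strongly biconnected directed graph with $n=|V|$, run Algorithm A (described in the context) on $G$, let $H=(V,U)$ be the minimal $2$-edge-connected spanning subgraph chosen in its step (1), and let $i$ be the number of b-bridges in $H$. Then the edge set $E_{2e}$ of the output of Algorithm A satisfies $|E_{2e}|\leq i(n-1)+5n$.
   Context: A directed graph is strongly biconnected if it is strongly connected and its underlying undirected graph (ignoring edge directions) is biconnected. A strongly biconnected component of a directed graph is a maximal strongly biconnected subgraph. A strongly biconnected directed graph $G=(V,E)$ is $2$-edge-strongly biconnected if it has at least three vertices and $(V,E\setminus\{e\})$ is strongly biconnected for every $e\in E$. For a directed graph $D=(V,F)$, an edge $e\in F$ is a b-bridge if $(V,F\setminus\{e\})$ is not strongly biconnected. A directed graph is $2$-edge-connected if it is strongly connected and remains strongly connected after deleting any single edge. Algorithm A, on input a $2$-edge-strongly biconnected directed graph $G=(V,E)$: (1) Choose $U\subseteq E$ such that $H=(V,U)$ is a minimal $2$-edge-connected spanning subgraph of $G$ (i.e. $H$ is $2$-edge-connected and deleting any edge of $U$ destroys $2$-edge-connectivity). (2) If $H$ is $2$-edge-strongly biconnected, output $H$ (so the output edge set is $E_{2e}=U$) and stop. (3) Otherwise set $E_{2e}:=U$. While the underlying undirected graph of $(V,E_{2e})$ is not biconnected: compute the strongly biconnected components of $(V,E_{2e})$, find an edge $(v,w)\in E\setminus E_{2e}$ such that $v,w$ are not in the same strongly biconnected component of $(V,E_{2e})$, and add $(v,w)$ to $E_{2e}$. (4) Compute the set of b-bridges of $(V,E_{2e})$.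 For each such b-bridge $t$: while the underlying undirected graph of $(V,E_{2e}\setminus\{t\})$ is not biconnected, compute the strongly biconnected components of $(V,E_{2e}\setminus\{t\})$, find an edge $(u,w)\in E\setminus E_{2e}$ such that $u,w$ are not in the same strongly biconnected component of $(V,E_{2e}\setminus\{t\})$, and add $(u,w)$ to $E_{2e}$. (5) Output $(V,E_{2e})$. *)

(* Defs.v *)
(* Directed graphs on a finite vertex type T (V = [set: T]);
   an edge set is a {set T * T}, the edge (x,y) being directed from x to y. *)
From mathcomp Require Import all_boot.
Set Implicit Arguments. Unset Strict Implicit. Unset Printing Implicit Defensive.

Section Digraphs.
Variable T : finType.
Notation edge := (T * T)%type.

Definition srel (S : {set T}) (F : {set edge}) : rel T :=
  fun x y => [&& x \in S, y \in S & (x, y) \in F].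
Definition urel (S : {set T}) (F : {set edge}) : rel T :=
  fun x y => [&& x \in S, y \in S & ((x, y) \in F) || ((y, x) \in F)].

Definition sconn (S : {set T}) (F : {set edge}) : bool :=
  [forall x in S, forall y in S, connect (srel S F) x y].
Definition uconn (S : {set T}) (F : {set edge}) : bool :=
  [forall x in S, forall y in S, connect (urel S F) x y].
Definition biconn (S : {set T}) (F : {set edge}) : bool :=
  uconn S F && [forall v in S, uconn (S :\ v) F].
Definition sbiconn (S : {set T}) (F : {set edge}) : bool :=
  sconn S F && biconn S F.

Definition strongly_biconnected (F : {set edge}) := sbiconn [set: T] F.
Definition two_edge_sb (F : {set edge}) : bool :=
  [&& 3 <= #|T|, strongly_biconnected F &
      [forall e in F, strongly_biconnected (F :\ e)]].
Definition two_edge_connected (F : {set edge}) : bool :=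
  sconn [set: T] F && [forall e in F, sconn [set: T] (F :\ e)].
Definition min_2ec_spanning (E U : {set edge}) : Prop :=
  [/\ U \subset E, two_edge_connected U &
      forall e, e \in U -> ~~ two_edge_connected (U :\ e)].
Definition bbridges (F : {set edge}) : {set edge} :=
  [set e in F | ~~ strongly_biconnected (F :\ e)].

Definition subgraph (F : {set edge}) (S : {set T}) (F' : {set edge}) : Prop :=
  F' \subset F /\ forall x y, (x, y) \in F' -> x \in S /\ y \in S.
Definition is_sbc (F : {set edge}) (S : {set T}) (F' : {set edge}) : Prop :=
  [/\ subgraph F S F', sbiconn S F' &
      forall S2 F2, subgraph F S2 F2 -> sbiconn S2 F2 ->
        S \subset S2 -> F' \subset F2 -> S = S2 /\ F' = F2].
Definition same_sbc (F : {set edge}) (v w : T) : Prop :=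
  exists S F', [/\ is_sbc F S F', v \in S & w \in S].

(* The augmentation while-loop, with current edge set Cur (= E_2e):
   while the underlying graph of (V, Cur \ R) is not biconnected, add an edge
   (v,w) in E \ Cur with v, w not in the same SBC of (V, Cur \ R).
   Step (3) uses R = set0, step (4) uses R = [set t].
   aug_loop E R Cur Out : Out is a possible final value. *)
Inductive aug_loop (E R : {set edge}) : {set edge} -> {set edge} -> Prop :=
| aug_stop Cur : biconn [set: T] (Cur :\: R) -> aug_loop E R Cur Cur
| aug_step Cur v w Out :
    ~~ biconn [set: T] (Cur :\: R) ->
    (v, w) \in E -> (v, w) \notin Cur ->
    ~ same_sbc (Cur :\: R) v w ->
    aug_loop E R ((v, w) |: Cur) Out -> aug_loop E R Cur Out.

(* step (4): process the b-bridges in the order given by the list *)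
Inductive bridge_loop (E : {set edge}) : seq edge -> {set edge} -> {set edge} -> Prop :=
| bl_nil Cur : bridge_loop E [::] Cur Cur
| bl_cons t ts Cur Mid Out :
    aug_loop E [set t] Cur Mid -> bridge_loop E ts Mid Out ->
    bridge_loop E (t :: ts) Cur Out.

(* Out is a possible output of Algorithm A on G = (V, E) when the minimal
   2-edge-connected spanning subgraph chosen in step (1) is (V, U). *)
Definition algA_run (E U Out : {set edge}) : Prop :=
  min_2ec_spanning E U /\
  ((two_edge_sb U /\ Out = U) \/
   (~~ two_edge_sb U /\
    exists F3 s, [/\ aug_loop E set0 U F3,
                     perm_eq s (enum (bbridges F3)) &
                     bridge_loop E s F3 Out])).
End Digraphs.

(* Main.v *)
Require Import Defs.
From mathcomp Require Import all_boot zify.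
Set Implicit Arguments. Unset Strict Implicit. Unset Printing Implicit Defensive.


Section Gen.
Variable T : finType.
Notation edge := (T * T)%type.

Lemma srelT (F : {set edge}) x y : srel setT F x y = ((x, y) \in F).
Proof. by rewrite /srel !inE. Qed.

Lemma cross (e : rel T) (X : {set T}) x y :
  connect e x y -> x \notin X -> y \in X -> exists a b, [/\ e a b, a \notin X & b \in X].
Proof.
move=> /connectP[p]; elim: p x => [|z p IH] x /=.
  by move=> _ -> /negP.
move=> /andP[exz pz] ey xX yX; case zX: (z \in X).
  by exists x, z.
exact: (IH z pz ey (negbT zX) yX).
Qed.

Lemma connect_srel_mono (S : {set T}) (F F' : {set edge}) x y :
  F \subset F' -> connect (srel S F) x y -> connect (srel S F') x y.
Proof.
move=> sFF'; apply: connect_sub => a b /and3P[aS bS abF]; apply: connect1.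
by rewrite /srel aS bS (subsetP sFF' _ abF).
Qed.

Lemma connect_urel_mono (S S' : {set T}) (F F' : {set edge}) x y :
  S \subset S' -> F \subset F' -> connect (urel S F) x y -> connect (urel S' F') x y.
Proof.
move=> sS sF; apply: connect_sub => a b /and3P[aS bS abF]; apply: connect1.
rewrite /urel (subsetP sS _ aS) (subsetP sS _ bS) /=.
by case/orP: abF => h; rewrite (subsetP sF _ h) ?orbT.
Qed.

Lemma urel_sym (S : {set T}) (F : {set edge}) : connect_sym (urel S F).
Proof.
apply: sym_connect_sym => a b; rewrite /urel.
by apply/idP/idP => /and3P[-> -> /=]; rewrite orbC.
Qed.

Lemma srel_urel (S : {set T}) (F : {set edge}) x y :
  connect (srel S F) x y -> connect (urel S F) x y.
Proof.
apply: connect_sub => a b /and3P[aS bS abF]; apply: connect1.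
by rewrite /urel aS bS abF.
Qed.

Lemma grow r (P : {set edge} -> {set T} -> Prop) :
  P set0 [set r] ->
  (forall B S, P B S -> r \in S -> (forall e, e \in B -> e.2 \in S) -> S != setT ->
     exists a b, [/\ a \in S, b \notin S & P ((a,b) |: B) (b |: S)]) ->
  exists B, [/\ P B setT, #|B| < #|T| & forall x, connect (srel setT B) r x].
Proof.
move=> P0 step.
suff: forall k B S, #|~: S| = k -> P B S -> r \in S ->
    (forall e, e \in B -> (e.1 \in S) && (e.2 \in S)) -> #|B| < #|S| ->
    (forall x, x \in S -> connect (srel setT B) r x) ->
    exists B, [/\ P B setT, #|B| < #|T| & forall x, connect (srel setT B) r x].
  move=> H; apply: (H _ set0 [set r] erefl P0).
  - by rewrite set11.
  - by move=> e; rewrite in_set0.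
  - by rewrite cards0 cards1.
  - by move=> x; rewrite inE => /eqP ->; apply: connect0.
elim=> [|k IH] B S hk PS rS hB cB cS.
  have ST : S = setT.
    apply/setP=> x; rewrite inE; apply/negPn/negP => xS.
    by move/eqP: hk; rewrite cards_eq0 => /eqP/setP/(_ x); rewrite !inE xS.
  subst S; exists B; split => //; first by rewrite -cardsT.
  by move=> x; apply: cS; rewrite inE.
have SnT : S != setT by apply/eqP => ST; move: hk; rewrite ST setCT cards0.
have [a [b [aS bS Pn]]] := step B S PS rS (fun e he => proj2 (andP (hB e he))) SnT.
apply: (IH ((a,b)|:B) (b|:S)) => //.
- have -> : ~: (b |: S) = (~: S) :\ b.
    by apply/setP => x; rewrite !inE negb_or andbC.
  by move: hk; rewrite (cardsD1 b) !inE bS /= add1n => -[].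
- by rewrite !inE rS orbT.
- move=> e; rewrite !inE => /orP[/eqP -> /=| /hB /andP[h1 h2]].
    by rewrite aS eqxx !orbT.
  by rewrite h1 h2 !orbT.
- rewrite !cardsU1 bS.
  by case: ((a, b) \notin B) => /=; rewrite ?add0n ?add1n ltnS /= ?(ltnW cB).
- move=> x; rewrite !inE => /orP[/eqP ->|xS].
    apply: (connect_trans (y := a)).
      by apply: (connect_srel_mono (F := B)); [apply: subsetUr| apply: cS].
    by apply: connect1; rewrite srelT !inE eqxx.
  by apply: (connect_srel_mono (F := B)); [apply: subsetUr| apply: cS].
Qed.

End Gen.


Section Edm.
Variable T : finType.
Notation edge := (T * T)%type.

Definition enters (e : edge) (Y : {set T}) := (e.1 \notin Y) && (e.2 \in Y).
Definition tight (F : {set edge}) (r : T) (Y : {set T}) :=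
  [&& r \notin Y, Y != set0 &
      [forall e in F, forall f in F, enters e Y ==> enters f Y ==> (e == f)]].
Definition reach (F : {set edge}) r := forall x, connect (srel setT F) r x.

Lemma tightP F r Y : tight F r Y -> forall e f, e \in F -> f \in F ->
  enters e Y -> enters f Y -> e = f.
Proof.
move=> /and3P[_ _ /forallP H] e f eF fF eY fY.
move: (H e); rewrite eF /= => /forallP/(_ f); rewrite fF eY fY /=.
by move/eqP.
Qed.

Lemma reach_cross F r (X : {set T}) x : reach F r -> r \notin X -> x \in X ->
  exists e, e \in F /\ enters e X.
Proof.
move=> R rX xX; have [a [b [ab aX bX]]] := cross (R x) rX xX.
by exists (a, b); rewrite -srelT /enters /= aX bX.
Qed.

Lemma tight_cap F r Y Y' : reach F r -> tight F r Y -> tight F r Y' ->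
  Y :&: Y' != set0 -> tight F r (Y :&: Y').
Proof.
move=> R tY tY' ne.
have tYP := tightP tY; have tY'P := tightP tY'.
case/and3P: tY => rY _ _; case/and3P: tY' => rY' _ _.
case/set0Pn: ne => x xYY.
have [f [fF fE]] : exists f, f \in F /\ enters f (Y :|: Y').
  apply: (reach_cross (x := x) R); first by rewrite !inE negb_or rY rY'.
  by case/setIP: xYY => xY _; rewrite inE xY.
apply/and3P; split.
- by rewrite inE negb_and rY.
- by apply/set0Pn; exists x.
apply/forallP => g; apply/implyP => gF; apply/forallP => h; apply/implyP => hF.
apply/implyP => gE; apply/implyP => hE; apply/eqP.
have split2 : forall k, enters k (Y :&: Y') -> enters k Y || enters k Y'.
  move=> k; rewrite /enters !inE negb_and => /andP[/orP[->|->] /andP[-> ->]];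
  by rewrite ?orbT.
have key : forall g h, g \in F -> h \in F -> enters g (Y :&: Y') ->
    enters h (Y :&: Y') -> enters g Y -> enters h Y' -> g = h.
  move=> g1 h1 g1F h1F g1E h1E g1Y h1Y'.
  move: fE; rewrite /enters !inE negb_or => /andP[/andP[f1Y f1Y'] /orP[f2Y|f2Y']].
  - have fg : f = g1 by apply: tYP; rewrite // /enters f1Y f2Y.
    apply: tY'P => //; rewrite /enters -fg f1Y' /=.
    by move: g1E; rewrite /enters fg !inE => /andP[_ /andP[]].
  - have fh : f = h1 by apply: tY'P; rewrite // /enters f1Y' f2Y'.
    apply: tYP => //; rewrite /enters -fh f1Y /=.
    by move: h1E; rewrite /enters fh !inE => /andP[_ /andP[]].
case/orP: (split2 g gE) => gY; case/orP: (split2 h hE) => hY.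
- exact: tYP.
- exact: key.
- by apply/esym; apply: key.
- exact: tY'P.
Qed.

Lemma keep (A B : {set edge}) r a b x : (a, b) \in A -> reach (A :\: B) r ->
  ~~ connect (srel setT (A :\: ((a, b) |: B))) r x ->
  exists Y, [/\ tight (A :\: B) r Y, a \notin Y & b \in Y].
Proof.
move=> abA R nx.
set Y := [set y | ~~ connect (srel setT (A :\: ((a, b) |: B))) r y].
have rY : r \notin Y by rewrite inE connect0.
have xY : x \in Y by rewrite inE.
have only : forall f, f \in A :\: B -> enters f Y -> f = (a, b).
  case=> f1 f2 fAB; rewrite /enters !inE negbK /= => /andP[c1 c2].
  apply/eqP; apply/negP => /negP nab; move/negP: c2; apply.
  apply: (connect_trans c1); apply: connect1; rewrite srelT.
  by move: fAB; rewrite !inE => /andP[nB ->]; rewrite andbT; apply/norP; split => //; apply/negP => /eqP E; apply: nab; rewrite E.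
have [f [fF fE]] := reach_cross R rY xY.
have fab := only f fF fE.
exists Y; split.
- apply/and3P; split => //; first by apply/set0Pn; exists x.
  apply/forallP => g; apply/implyP => gF; apply/forallP => h; apply/implyP => hF.
  apply/implyP => gE; apply/implyP => hE.
  by rewrite (only g gF gE) (only h hF hE).
- by move: fE; rewrite fab /enters => /andP[].
- by move: fE; rewrite fab /enters => /andP[].
Qed.

Definition cut2 (F : {set edge}) (X : {set T}) :=
  exists e1 e2, [/\ e1 \in F, e2 \in F, e1 != e2, enters e1 X & enters e2 X].

Lemma reach_of_cut (F : {set edge}) r : (forall X : {set T}, r \notin X -> X != set0 -> exists e, e \in F /\ enters e X) ->
  reach F r.
Proof.
move=> H x; apply/negPn/negP => nx.
set Y := [set y | ~~ connect (srel setT F) r y].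
have [|| [e1 e2] [eF]] := H Y.
- by rewrite inE connect0.
- by apply/set0Pn; exists x; rewrite inE.
rewrite /enters !inE negbK /= => /andP[c1 c2]; move/negP: c2; apply.
by apply: (connect_trans c1); apply: connect1; rewrite srelT.
Qed.

Lemma edmonds1 (A : {set edge}) r : (forall X : {set T}, r \notin X -> X != set0 -> cut2 A X) ->
  exists B : {set edge}, [/\ B \subset A, reach (A :\: B) r, #|B| < #|T| & reach B r].
Proof.
move=> H2.
have [B [[BA RB] cB rB]] : exists B : {set edge}, [/\ B \subset A /\ reach (A :\: B) r, #|B| < #|T|
     & forall x, connect (srel setT B) r x].
  apply: (grow (P := fun (B : {set edge}) (S : {set T}) => B \subset A /\ reach (A :\: B) r)).
    split; first exact: sub0set.
    rewrite setD0; apply: reach_of_cut => X rX nX.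
    by have [e1 [e2 [? _ _ ? _]]] := H2 X rX nX; exists e1.
  move=> B S [BA RB] rS hB SnT.
  have [a [b [abA aS bS H]] ] : exists a b, [/\ (a, b) \in A, a \in S, b \notin S &
       forall Y, tight (A :\: B) r Y -> a \notin Y -> b \in Y -> False].
    have pick : forall Y, tight (A :\: B) r Y -> (forall Y', tight (A :\: B) r Y' ->
        Y' :\: S != set0 -> #|Y| <= #|Y'|) -> forall e, e \in A -> e.1 \in Y ->
        enters e (Y :\: S) -> exists a b, [/\ (a, b) \in A, a \in S, b \notin S &
       forall Y, tight (A :\: B) r Y -> a \notin Y -> b \in Y -> False].
      move=> Y tY minY [a b] eA /= aY; rewrite /enters /= !inE negb_and aY /= negbK.
      move=> /andP[aS /andP[bS bY]].
      rewrite orbF in aS; exists a, b; split => // Y' tY' aY' bY'.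
      have ne : Y :&: Y' != set0 by apply/set0Pn; exists b; rewrite inE bY bY'.
      have tI := tight_cap RB tY tY' ne.
      have := minY _ tI; rewrite (_ : (Y :&: Y') :\: S != set0); last first.
        by apply/set0Pn; exists b; rewrite !inE bS bY bY'.
      move=> /(_ isT) le.
      have : Y :&: Y' == Y by rewrite eqEcard subsetIl le.
      move/eqP/setP/(_ a); rewrite !inE aY /=.
      by move=> E; move: aY'; rewrite E.
    case: (boolP [exists Y : {set T}, tight (A :\: B) r Y && (Y :\: S != set0)]).
      case/existsP => Y0 hY0.
      case: (@arg_minnP _ Y0 (fun Y => tight (A :\: B) r Y && (Y :\: S != set0))
        (fun Y => #|Y|) hY0) => Y /andP[tY YS] minY.
      have minY' : forall Y', tight (A :\: B) r Y' -> Y' :\: S != set0 -> #|Y| <= #|Y'|.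
        by move=> Y' t1 t2; apply: minY; rewrite t1 t2.
      have rY : r \notin Y :\: S by rewrite inE negb_and; case/and3P: tY => -> _ _; rewrite orbT.
      have [e1 [e2 [e1A e2A ne e1E e2E]]] := H2 _ rY YS.
      have notB : forall e, enters e (Y :\: S) -> e \notin B.
        move=> e; rewrite /enters !inE => /andP[_ /andP[e2S _]]; apply/negP => /hB.
        by rewrite (negbTE e2S).
      case h1: (e1.1 \in Y); first exact: (pick Y tY minY' e1).
      case h2: (e2.1 \in Y); first exact: (pick Y tY minY' e2).
      have E : e1 = e2.
        apply: (tightP tY); rewrite ?inE ?notB ?e1A ?e2A //.
          by move: e1E; rewrite /enters !inE h1 => /andP[_ /andP[_ ->]].
        by move: e2E; rewrite /enters !inE h2 => /andP[_ /andP[_ ->]].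
      by move: ne; rewrite E eqxx.
    move=> nex.
    have rS' : r \notin ~: S by rewrite inE rS.
    have nS : ~: S != set0.
      move: SnT; apply: contra => /eqP h; apply/eqP; apply/setP => x; rewrite inE.
      by apply/negPn/negP => xS; move/setP/(_ x): h; rewrite !inE xS.
    have [[a b] [_ [abA _ _ abE _]]] := H2 _ rS' nS.
    move: abE; rewrite /enters /= !inE negbK => /andP[aS bS].
    exists a, b; split => // Y tY aY bY.
    move/negP: nex; apply; apply/existsP; exists Y; rewrite tY /=.
    by apply/set0Pn; exists b; rewrite inE bY bS.
  exists a, b; split => //; split.
    by apply/subsetP => e; rewrite !inE => /orP[/eqP ->|/(subsetP BA)].
  move=> x; apply/negPn/negP => nx.
  have [Y [tY aY bY]] := keep abA RB nx.
  by apply: (H Y).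
by exists B.
Qed.

End Edm.


Section Bound.
Variable T : finType.
Notation edge := (T * T)%type.

Lemma edmonds2 (A : {set edge}) r : (forall X : {set T}, r \notin X -> X != set0 -> cut2 A X) ->
  exists B1 B2 : {set edge}, [/\ B1 \subset A, B2 \subset A :\: B1, #|B1| < #|T| & #|B2| < #|T|] /\
     reach B1 r /\ reach B2 r.
Proof.
move=> H2; have [B1 [B1A R1 c1 r1]] := edmonds1 H2.
have step : forall (B : {set edge}) (S : {set T}), B \subset A :\: B1 -> r \in S ->
    (forall e, e \in B -> e.2 \in S) -> S != setT ->
    exists a b, [/\ a \in S, b \notin S & (a, b) |: B \subset A :\: B1].
  move=> B S BA rS _ SnT.
  have [x xS] : exists x, x \notin S.
    by move: SnT; rewrite eqEsubset subsetT /= => /subsetPn[x _ xS]; exists x.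
  have rS' : r \notin ~: S by rewrite inE rS.
  have xS' : x \in ~: S by rewrite inE.
  have [[a b] [abF]] := reach_cross R1 rS' xS'.
  rewrite /enters /= !inE negbK => /andP[aS bS].
  exists a, b; split => //.
  by apply/subsetP => e; rewrite !inE => /orP[/eqP -> | /(subsetP BA)]; rewrite -in_setD.
have [B2 [B2A c2 r2]] := grow (P := fun (B : {set edge}) (S : {set T}) => B \subset A :\: B1)
  (sub0set _) step.
by exists B1, B2.
Qed.

Lemma sconnP (S : {set T}) F x y : sconn S F -> x \in S -> y \in S -> connect (srel S F) x y.
Proof.
by move=> /forallP/(_ x)/implyP H xS yS; move: (H xS) => /forallP/(_ y)/implyP/(_ yS).
Qed.

Lemma sconn_root (F : {set edge}) r : (forall x, connect (srel setT F) r x) ->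
  (forall x, connect (srel setT F) x r) -> sconn setT F.
Proof.
move=> h1 h2; apply/forallP => x; apply/implyP => _; apply/forallP => y; apply/implyP => _.
exact: connect_trans (h2 x) (h1 y).
Qed.

Lemma sconn_mono (S : {set T}) (F F' : {set edge}) : F \subset F' -> sconn S F -> sconn S F'.
Proof.
move=> sF H; apply/forallP => x; apply/implyP => xS; apply/forallP => y; apply/implyP => yS.
exact: connect_srel_mono sF (sconnP H xS yS).
Qed.

Lemma tec_mono (W F : {set edge}) : W \subset F -> two_edge_connected W -> two_edge_connected F.
Proof.
move=> sWF /andP[sW /forallP hW]; apply/andP; split; first exact: sconn_mono sW.
apply/forallP => f; apply/implyP => fF.
case fW: (f \in W).
  move: (hW f); rewrite fW /=; apply: sconn_mono.
  by apply/subsetP => e; rewrite !inE => /andP[-> /(subsetP sWF)].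
apply: sconn_mono sW; apply/subsetP => e eW; rewrite !inE (subsetP sWF _ eW) andbT.
by apply/eqP => ef; move: fW; rewrite -ef eW.
Qed.

Lemma tec_cut2 (U : {set edge}) (X : {set T}) : two_edge_connected U -> X != set0 -> X != setT ->
  cut2 U X.
Proof.
move=> /andP[sU /forallP hU] /set0Pn[y yX] XT.
have [x xX] : exists x, x \notin X.
  by move: XT; rewrite eqEsubset subsetT /= => /subsetPn[x _ xX]; exists x.
have [a [b [ab aX bX]]] := cross (sconnP sU (in_setT x) (in_setT y)) xX yX.
have abU : (a, b) \in U by rewrite -srelT.
move/implyP: (hU (a, b)) => /(_ abU) sU'.
have [c [d [cd cX dX]]] := cross (sconnP sU' (in_setT x) (in_setT y)) xX yX.
move: cd; rewrite srelT !inE => /andP[ne cdU].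
by exists (a, b), (c, d); rewrite /enters /= aX bX cX dX abU cdU eq_sym ne.
Qed.

Definition rev_e (F : {set edge}) : {set edge} := [set (e.2, e.1) | e in F].

Lemma mem_rev_e (F : {set edge}) x y : ((x, y) \in rev_e F) = ((y, x) \in F).
Proof.
apply/imsetP/idP => [[[a b] h [-> ->]] //| h].
by exists (y, x).
Qed.

Lemma card_rev_e (F : {set edge}) : #|rev_e F| = #|F|.
Proof. by apply: card_imset => -[a b] [c d] [-> ->]. Qed.

Lemma connect_rev_e (F : {set edge}) x y :
  connect (srel setT F) x y -> connect (srel setT (rev_e F)) y x.
Proof.
move=> h; have E := connect_rev (srel setT F) y x; rewrite /= h in E.
rewrite (@eq_connect _ (srel setT (rev_e F)) [rel a b | srel setT F b a]) //.
by move=> a b; rewrite /= !srelT mem_rev_e.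
Qed.

Lemma cut2_rev (U : {set edge}) r (X : {set T}) : two_edge_connected U -> r \notin X ->
  X != set0 -> cut2 (rev_e U) X.
Proof.
move=> tU rX nX.
have h1 : ~: X != set0 by apply/set0Pn; exists r; rewrite inE.
have h2 : ~: X != setT by case/set0Pn: nX => x xX; apply/eqP => /setP/(_ x); rewrite !inE xX.
have [[a b] [[c d] [abU cdU ne abE cdE]]] := tec_cut2 tU h1 h2.
exists (b, a), (d, c); rewrite !mem_rev_e abU cdU.
move: abE cdE; rewrite /enters /= !inE !negbK => /andP[-> ->] /andP[-> ->].
by split => //; apply: contra ne => /eqP [-> ->].
Qed.

Lemma notT (X : {set T}) r : r \notin X -> X != setT.
Proof. by move=> rX; apply/eqP => XT; move: rX; rewrite XT inE. Qed.

Lemma min2ec_bound (E U : {set edge}) (r : T) : min_2ec_spanning E U -> #|U| <= 4 * (#|T| - 1).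
Proof.
case=> _ tU minU.
have [B1 [B2 [[B1U B2U c1 c2] [r1 r2]]]] := @edmonds2 U r (fun X rX nX => tec_cut2 tU nX (notT rX)).
have [B3 [B4 [[B3U B4U c3 c4] [r3 r4]]]] := @edmonds2 (rev_e U) r (fun X rX nX => cut2_rev tU rX nX).
set W := B1 :|: B2 :|: rev_e B3 :|: rev_e B4.
have revsub : forall B : {set edge}, B \subset rev_e U -> rev_e B \subset U.
  move=> B BU; apply/subsetP => -[x y]; rewrite mem_rev_e => /(subsetP BU).
  by rewrite mem_rev_e.
have WU : W \subset U.
  rewrite !subUset B1U (subset_trans B2U (subsetDl _ _)) revsub //.
  by rewrite revsub // (subset_trans B4U (subsetDl _ _)).
have in_r : forall (B : {set edge}) x, reach B r -> rev_e B \subset W -> connect (srel setT W) x r.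
  move=> B x rB BW; apply: (connect_srel_mono BW).
  exact: connect_rev_e (rB x).
have out_r : forall (B : {set edge}) x, reach B r -> B \subset W -> connect (srel setT W) r x.
  by move=> B x rB BW; apply: (connect_srel_mono BW).
have tW : two_edge_connected W.
  apply/andP; split.
    apply: sconn_root => x.
      by apply: (out_r B1) => //; apply/subsetP => f fB; rewrite !in_setU fB.
    by apply: (in_r B3) => //; apply/subsetP => f fB; rewrite !in_setU fB !orbT.
  apply/forallP => e; apply/implyP => eW.
  apply: sconn_root => x.
    have [eB1|eB1] := boolP (e \in B1).
      have eB2 : e \notin B2 by apply/negP => /(subsetP B2U); rewrite inE eB1.
      apply: (connect_srel_mono (F := B2)); last exact: r2 x.
      apply/subsetP => f fB; rewrite !inE fB ?orbT andbT.
      by apply/eqP => fe; move: eB2; rewrite -fe fB.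
    apply: (connect_srel_mono (F := B1)); last exact: r1 x.
    apply/subsetP => f fB; rewrite !inE fB ?orbT andbT.
    by apply/eqP => fe; move: eB1; rewrite -fe fB.
  have [eB3|eB3] := boolP (e \in rev_e B3).
    have eB4 : e \notin rev_e B4.
      apply/negP; case: e eB3 {eW} => a b; rewrite !mem_rev_e => h /(subsetP B4U).
      by rewrite inE h.
    apply: (connect_srel_mono (F := rev_e B4)).
      apply/subsetP => f fB; rewrite !inE fB ?orbT andbT.
      by apply/eqP => fe; move: eB4; rewrite -fe fB.
    exact: connect_rev_e (r4 x).
  apply: (connect_srel_mono (F := rev_e B3)).
    apply/subsetP => f fB; rewrite !inE fB ?orbT andbT.
    by apply/eqP => fe; move: eB3; rewrite -fe fB.
  exact: connect_rev_e (r3 x).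
have UW : U \subset W.
  apply/subsetP => e eU; apply/negPn/negP => eW.
  move/negP: (minU e eU); apply; apply: tec_mono tW.
  apply/subsetP => f fW; rewrite !inE (subsetP WU _ fW) andbT.
  by apply/eqP => fe; move: eW; rewrite -fe fW.
apply: (leq_trans (subset_leq_card UW)).
apply: (leq_trans (leq_card_setU _ _)).
rewrite card_rev_e.
apply: (leq_trans (leq_add (leq_card_setU _ _) (leqnn _))).
rewrite card_rev_e.
apply: (leq_trans (leq_add (leq_add (leq_card_setU _ _) (leqnn _)) (leqnn _))).
lia.
Qed.

End Bound.


Section Lead.
Variable T : finType.
Notation edge := (T * T)%type.
Variables (B : {set edge}) (r : T).
Hypothesis rB : reach B r.

Definition cv (G : {set edge}) v x y := connect (urel (setT :\ v) G) x y.

Definition Nb v : {set T} :=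
  [set z | (((v, z) \in B) && (z != v)) || ((v != r) && (z == r))].

Definition rk (x : T) : nat := enum_rank x.

Definition Lead (G : {set edge}) : {set edge} :=
  [set p | (p.2 \in Nb p.1) &&
     [forall y in Nb p.1, (rk y < rk p.2) ==> ~~ cv G p.1 y p.2]].

Lemma cv_from_v G v u : cv G v v u -> u = v.
Proof.
move=> /connectP[[|z p] /=]; first by move=> _ ->.
by rewrite /urel !inE eqxx.
Qed.

Lemma cv_sym G v x y : cv G v x y = cv G v y x.
Proof. exact: urel_sym. Qed.

Lemma cv_trans G v x y z : cv G v x y -> cv G v y z -> cv G v x z.
Proof. exact: connect_trans. Qed.

Lemma cover (G : {set edge}) v u : B \subset G -> u != v -> exists2 a, a \in Nb v & cv G v a u.
Proof.
move=> BG uv.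
have K : forall p x, path (srel setT B) x p -> u = last x p ->
    cv G v x u \/ exists2 z, ((v, z) \in B) && (z != v) & cv G v z u.
  elim=> [|z p IH] x /=.
    by move=> _ ->; left; apply: connect0.
  move=> /andP[exz pz] ul; case: (IH z pz ul) => [czu|]; last by right.
  have zv : z != v.
    by apply/eqP => zv; move: czu; rewrite zv => /cv_from_v /eqP; rewrite (negbTE uv).
  case: (eqVneq x v) => [xv|xv].
    by right; exists z => //; rewrite zv andbT -srelT -xv.
  left; apply: connect_trans czu; apply: connect1.
  by move: exz; rewrite srelT => /(subsetP BG) h; rewrite /urel !inE xv zv h.
have /connectP[p pp ul] := rB u.
case: (K p r pp ul) => [cru|[z zB czu]].
  exists r => //; rewrite inE eqxx andbT; apply/orP; right.
  by apply/eqP => vr; move: cru; rewrite -vr => /cv_from_v /eqP; rewrite (negbTE uv).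
by exists z => //; rewrite inE zB.
Qed.

Lemma lead_mono (G G' : {set edge}) : G \subset G' -> Lead G' \subset Lead G.
Proof.
move=> sG; apply/subsetP => -[v z]; rewrite !inE /= => /andP[-> /forallP H] /=.
apply/forallP => y; apply/implyP => yN; apply/implyP => lt.
move: (H y); rewrite yN lt /= => nc; apply: contra nc.
exact: connect_urel_mono (subxx _) sG.
Qed.

Lemma lead_ex (G : {set edge}) v : B \subset G -> (exists u, u != v) -> exists z, (v, z) \in Lead G.
Proof.
move=> BG [u uv]; have [a aN _] := cover BG uv.
case: (@arg_minnP _ a (fun y => y \in Nb v) rk aN) => m mN minm.
exists m; rewrite inE /= mN /=; apply/forallP => y; apply/implyP => yN.
by apply/implyP => lt; move: (minm y yN); rewrite leqNgt lt.
Qed.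

Lemma lead_ge (G : {set edge}) : B \subset G -> 1 < #|T| -> #|T| <= #|Lead G|.
Proof.
move=> BG n2.
have E : [set p.1 | p in Lead G] = [set: T].
  apply/setP => v; rewrite inE; apply/imsetP.
  have [u uv] : exists u, u != v.
    case: (pickP (fun u => u != v)) => [u uv|none]; first by exists u.
    move: n2; rewrite -cardsT (cardsD1 v) inE.
    have -> : [set: T] :\ v = set0.
      by apply/setP => x; rewrite !inE andbT; move: (none x) => /= ->.
    by rewrite cards0.
  have [z zL] := lead_ex BG (ex_intro _ u uv).
  by exists (v, z).
rewrite -cardsT -E; exact: leq_imset_card.
Qed.

Lemma lead_le (G : {set edge}) : #|Lead G| <= #|B| + (#|T| - 1).
Proof.
have sub : Lead G \subset B :|: [set (v, r) | v in ~: [set r]].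
  apply/subsetP => -[v z]; rewrite inE /= => /andP[]; rewrite inE.
  case/orP => [/andP[vzB _] _|/andP[vr /eqP ->] _]; first by rewrite inE vzB.
  rewrite inE; apply/orP; right; apply/imsetP; exists v => //.
  by rewrite !inE.
apply: (leq_trans (subset_leq_card sub)).
apply: (leq_trans (leq_card_setU _ _)); rewrite leq_add2l.
apply: (leq_trans (leq_imset_card _ _)).
by rewrite cardsC1; lia.
Qed.

Lemma lead_strict (G G' : {set edge}) v u w : B \subset G -> G \subset G' ->
  u != v -> w != v -> (u, w) \in G' -> ~~ cv G v u w -> #|Lead G'| < #|Lead G|.
Proof.
move=> BG sG uv wv uwG ncuw.
have [a aN cau] := cover BG uv.
have [b bN cbw] := cover BG wv.
have rep : forall c, c \in Nb v -> exists2 c', (v, c') \in Lead G & cv G v c' c.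
  move=> c cN.
  case: (@arg_minnP _ c (fun y => (y \in Nb v) && cv G v y c) rk).
    by rewrite cN; apply: connect0.
  move=> m /andP[mN mc] minm; exists m => //.
  rewrite inE /= mN /=; apply/forallP => y; apply/implyP => yN.
  apply/implyP => lt; apply/negP => cym.
  by move: (minm y); rewrite yN (cv_trans cym mc) /= leqNgt lt => /(_ isT).
have [a' a'L ca'a] := rep a aN.
have [b' b'L cb'b] := rep b bN.
have nab : ~~ cv G v a' b'.
  apply: contra ncuw => cab.
  apply: (cv_trans (y := a)); first by rewrite cv_sym.
  apply: (cv_trans (y := a')); first by rewrite cv_sym.
  apply: (cv_trans cab); exact: cv_trans cb'b cbw.
have c' : cv G' v a' b'.
  have m := fun x y (h : cv G v x y) => connect_urel_mono (subxx _) sG h.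
  apply: (cv_trans (m _ _ ca'a)).
  apply: (cv_trans (m _ _ cau)).
  apply: (cv_trans (y := w)).
    by apply: connect1; rewrite /urel !inE uv wv uwG.
  by rewrite cv_sym; apply: (cv_trans (m _ _ cb'b)); exact: m _ _ cbw.
have key : forall x y, (v, x) \in Lead G -> (v, y) \in Lead G -> cv G' v x y ->
    rk x < rk y -> (v, y) \notin Lead G'.
  move=> x y xL yL cxy lt; rewrite inE /= negb_and; apply/orP; right.
  rewrite negb_forall; apply/existsP; exists x.
  by move: xL; rewrite inE /= => /andP[-> _]; rewrite /= lt cxy.
have [z zL znL] : exists2 z, z \in Lead G & z \notin Lead G'.
  case: (ltngtP (rk a') (rk b')) => [lt|lt|eq].
  - by exists (v, b') => //; apply: (key a').
  - by exists (v, a') => //; apply: (key b') => //; rewrite cv_sym.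
  - have ab : a' = b' by apply: enum_rank_inj; apply: val_inj.
    by move: nab; rewrite ab; rewrite /cv connect0.
apply: proper_card; rewrite properE (lead_mono sG) /=.
by apply/subsetPn; exists z.
Qed.

End Lead.


Section Block.
Variable T : finType.
Notation edge := (T * T)%type.

Lemma proj (e e' : rel T) (pi : T -> T) x y :
  (forall a b, e a b -> pi a = pi b \/ e' (pi a) (pi b)) ->
  connect e x y -> connect e' (pi x) (pi y).
Proof.
move=> H /connectP[p pp ->]; elim: p x pp => [|z p IH] x /=; first by move=> _; exact: connect0.
move=> /andP[exz pz]; apply: connect_trans (IH z pz).
by case: (H x z exz) => [->|h]; [exact: connect0 | exact: connect1].
Qed.

Section ProjSet.
Variables (S0 S1 : {set T}) (d : T) (F : {set edge}).
Hypothesis S10 : S1 \subset S0.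
Hypothesis dS1 : d \in S1.
Hypothesis cond : forall a b, a \in S0 -> b \in S0 -> a \in S1 -> b \notin S1 ->
  ((a, b) \in F) || ((b, a) \in F) -> a = d.

Let pi z := if z \in S1 then z else d.

Lemma proj_u x y : x \in S1 -> y \in S1 -> connect (urel S0 F) x y -> connect (urel S1 F) x y.
Proof.
move=> xS yS h; have := proj (e' := urel S1 F) (pi := pi) _ h.
rewrite /pi xS yS; apply => a b /and3P[aS bS ab].
case aS1: (a \in S1); case bS1: (b \in S1).
- by right; rewrite /urel aS1 bS1.
- by left; apply: (cond aS bS aS1 (negbT bS1) ab).
- left; apply/esym; apply: (cond bS aS bS1 (negbT aS1)); by rewrite orbC.
- by left.
Qed.

Lemma proj_s x y : x \in S1 -> y \in S1 -> connect (srel S0 F) x y -> connect (srel S1 F) x y.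
Proof.
move=> xS yS h; have := proj (e' := srel S1 F) (pi := pi) _ h.
rewrite /pi xS yS; apply => a b /and3P[aS bS ab].
case aS1: (a \in S1); case bS1: (b \in S1).
- by right; rewrite /srel aS1 bS1.
- by left; apply: (cond aS bS aS1 (negbT bS1)); rewrite ab.
- left; apply/esym; apply: (cond bS aS bS1 (negbT aS1)); by rewrite ab orbT.
- by left.
Qed.
End ProjSet.

Lemma block_ex (G : {set edge}) u w : u != w ->
  forall k (S0 : {set T}), #|S0| <= k -> u \in S0 -> w \in S0 -> sconn S0 G ->
  (forall v, v \in S0 -> v != u -> v != w -> connect (urel (S0 :\ v) G) u w) ->
  exists S : {set T}, [/\ u \in S, w \in S & sbiconn S G].
Proof.
move=> uw; elim=> [|k IH] S0 cardS uS wS sS H.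
  by move: cardS; rewrite leqn0 cards_eq0 => /eqP S00; move: uS; rewrite S00 inE.
case bS: (biconn S0 G); first by exists S0; rewrite /sbiconn sS bS.
have uc : uconn S0 G.
  apply/forallP => x; apply/implyP => xS; apply/forallP => y; apply/implyP => yS.
  exact: srel_urel (sconnP sS xS yS).
move: bS; rewrite /biconn uc /= => /negbT; rewrite negb_forall => /existsP[c].
rewrite negb_imply => /andP[cS].
rewrite negb_forall => /existsP[x]; rewrite negb_imply => /andP[xS].
rewrite negb_forall => /existsP[y]; rewrite negb_imply => /andP[yS nxy].
set a := if c == u then w else u.
have aS : a \in S0 :\ c.
  rewrite /a; case: eqP => [cu|/eqP cu]; rewrite !inE ?uS ?wS ?andbT.
    by rewrite cu eq_sym.
  by rewrite eq_sym.
set C := [set z in S0 :\ c | connect (urel (S0 :\ c) G) a z].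
have clos : forall p q, p \in C -> q \in S0 :\ c -> ((p, q) \in G) || ((q, p) \in G) -> q \in C.
  move=> p q; rewrite !inE => /andP[/andP[pc pS] ap] /andP[qc qS] pq.
  rewrite qc qS /=; apply: (connect_trans ap); apply: connect1.
  by rewrite /urel !inE pc pS qc qS.
have CS : C \subset S0 :\ c by apply/subsetP => z; rewrite inE => /andP[].
have cC : c \notin C by apply/negP => /(subsetP CS); rewrite !inE eqxx.
set S1 := c |: C.
have S10 : S1 \subset S0.
  by rewrite subUset sub1set cS (subset_trans CS (subsetDl _ _)).
have condS : forall p q, p \in S0 -> q \in S0 -> p \in S1 -> q \notin S1 ->
    ((p, q) \in G) || ((q, p) \in G) -> p = c.
  move=> p q pS qS pS1 qS1 pq; move: pS1; rewrite in_setU1 => /orP[/eqP //|pC].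
  have qc : q \in S0 :\ c.
    by rewrite !inE qS andbT; apply/eqP => qc; move: qS1; rewrite qc !inE eqxx.
  by move: qS1; rewrite in_setU1 (clos p q pC qc pq) orbT.
have uS1 : u \in S1.
  rewrite in_setU1; case: (eqVneq u c) => [//|uc'] /=.
  rewrite inE !inE uc' uS /= /a eq_sym (negbTE uc'); exact: connect0.
have wS1 : w \in S1.
  rewrite in_setU1; case: (eqVneq w c) => [//|wc'] /=.
  rewrite inE !inE wc' wS /= /a; case: eqP => [cu|/eqP cu]; first exact: connect0.
  by apply: H => //; rewrite eq_sym.
apply: (IH S1) => //.
- have : S1 \proper S0.
    rewrite properEneq S10 andbT; apply/eqP => E.
    move/negP: nxy; apply.
    have inC : forall z, z \in S0 :\ c -> z \in C.
      move=> z zS; have : z \in S1 by rewrite E; move: zS; rewrite !inE => /andP[].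
      rewrite in_setU1 => /orP[/eqP zc|//].
      by move: zS; rewrite zc !inE eqxx.
    have xC := inC x xS; have yC := inC y yS.
    move: xC yC; rewrite !inE => /andP[_ ax] /andP[_ ay].
    by apply: connect_trans ay; rewrite urel_sym.
  by move/proper_card => lt; rewrite -ltnS (leq_trans lt cardS).
- apply/forallP => p; apply/implyP => pS; apply/forallP => q; apply/implyP => qS.
  apply: (proj_s condS pS qS).
  exact: sconnP sS (subsetP S10 _ pS) (subsetP S10 _ qS).
- move=> v vS vu vw.
  have vS0 := subsetP S10 _ vS.
  have h := H v vS0 vu vw.
  case: (eqVneq v c) => [vc|vc].
    subst v.
    have S1c : S1 :\ c = C.
      apply/setP => z; rewrite in_setD1 in_setU1; case: (eqVneq z c) => [->|zc] /=.
        by rewrite (negbTE cC).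
      by [].
    rewrite S1c.
    have uC : u \in C by move: uS1; rewrite in_setU1 eq_sym (negbTE vu).
    have wC : w \in C by move: wS1; rewrite in_setU1 eq_sym (negbTE vw).
    apply: (proj_u (d := u) _ uC wC h).
    by move=> p q _ qS pC qC pq; move: qC; rewrite (clos p q pC qS pq).
  apply: (proj_u (d := c) _ _ _ h).
  - move=> p q; rewrite !in_setD1 => /andP[_ pS] /andP[qv qS] /andP[_ pS1] qS1 pq.
    apply: (condS p q pS qS pS1 _ pq).
    by move: qS1; rewrite qv.
  - by rewrite in_setD1 uS1 eq_sym vu.
  - by rewrite in_setD1 wS1 eq_sym vw.
Qed.

End Block.


Section Same.
Variable T : finType.
Notation edge := (T * T)%type.

Lemma sconn_eq (S : {set T}) (F F' : {set edge}) : srel S F =2 srel S F' -> sconn S F = sconn S F'.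
Proof.
move=> h; apply: eq_forallb => x; congr (_ ==> _); apply: eq_forallb => y; congr (_ ==> _).
exact: eq_connect.
Qed.

Lemma uconn_eq (S : {set T}) (F F' : {set edge}) : urel S F =2 urel S F' -> uconn S F = uconn S F'.
Proof.
move=> h; apply: eq_forallb => x; congr (_ ==> _); apply: eq_forallb => y; congr (_ ==> _).
exact: eq_connect.
Qed.

Definition subgraphb (F : {set edge}) (S : {set T}) (F' : {set edge}) :=
  (F' \subset F) && [forall e in F', (e.1 \in S) && (e.2 \in S)].

Lemma subgraphP F S F' : reflect (subgraph F S F') (subgraphb F S F').
Proof.
apply: (iffP andP) => [[sF /forallP H]|[sF H]]; split => //.
  by move=> x y xy; move: (H (x, y)); rewrite xy /= => /andP.
by apply/forallP => -[x y]; apply/implyP => xy; case: (H x y xy) => /= -> ->.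
Qed.

Lemma same_of_sb (G : {set edge}) (S : {set T}) u w : sbiconn S G -> u \in S -> w \in S ->
  same_sbc G u w.
Proof.
move=> sb uS wS.
set F' := [set e in G | (e.1 \in S) && (e.2 \in S)].
have sbF : sbiconn S F'.
  move: sb; rewrite /sbiconn /biconn.
  have -> : sconn S F' = sconn S G.
    apply: sconn_eq => x y; rewrite /srel !inE.
    by case: (x \in S); case: (y \in S); rewrite /= ?andbF ?andbT.
  have ue : forall S' : {set T}, S' \subset S -> uconn S' F' = uconn S' G.
    move=> S' sS; apply: uconn_eq => x y; rewrite /urel !inE.
    case xS: (x \in S'); case yS: (y \in S') => //=.
    by rewrite (subsetP sS _ xS) (subsetP sS _ yS) !andbT.
  rewrite ue //.
  have -> : [forall v in S, uconn (S :\ v) F'] = [forall v in S, uconn (S :\ v) G].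
    by apply: eq_forallb => v; rewrite ue // subD1set.
  done.
pose P (p : {set T} * {set edge}) :=
  [&& subgraphb G p.1 p.2, sbiconn p.1 p.2, S \subset p.1 & F' \subset p.2].
have P0 : P (S, F').
  rewrite /P /= sbF !subxx !andbT; apply/subgraphP; split.
    by apply/subsetP => e; rewrite inE => /andP[].
  by move=> x y; rewrite inE => /andP[_ /andP[]].
case: (@arg_maxnP _ (S, F') P (fun p => #|p.1| + #|p.2|) P0) => [[Sm Fm]].
rewrite /P /= => /and4P[/subgraphP sg sbm SSm FFm] maxm.
exists Sm, Fm; split; last by rewrite (subsetP SSm).
  split => // S2 F2 sg2 sb2 S2m F2m.
  have := maxm (S2, F2); rewrite /P /= (subset_trans SSm S2m) (subset_trans FFm F2m) sb2 andbT.
  have -> : subgraphb G S2 F2 by apply/subgraphP.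
  move=> /(_ isT) le.
  have c1 := subset_leq_card S2m; have c2 := subset_leq_card F2m.
  split; apply/eqP; rewrite eqEcard ?S2m ?F2m /=.
    by rewrite -(leq_add2r #|F2|) (leq_trans le) // leq_add2l.
  by rewrite -(leq_add2l #|S2|) (leq_trans le) // leq_add2r.
exact: (subsetP SSm).
Qed.

Lemma sb_single (G : {set edge}) u : sbiconn [set u] G.
Proof.
apply/andP; split.
  apply/forallP => x; apply/implyP; rewrite inE => /eqP ->.
  apply/forallP => y; apply/implyP; rewrite inE => /eqP ->; exact: connect0.
apply/andP; split.
  apply/forallP => x; apply/implyP; rewrite inE => /eqP ->.
  apply/forallP => y; apply/implyP; rewrite inE => /eqP ->; exact: connect0.
apply/forallP => v; apply/implyP; rewrite inE => /eqP ->.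
by apply/forallP => x; apply/implyP; rewrite !inE andbC; case: eqP => // ->; rewrite eqxx.
Qed.

Lemma sep_of_not_same (G : {set edge}) u w : sconn setT G -> ~ same_sbc G u w ->
  u != w /\ exists v, [/\ v != u, v != w & ~~ connect (urel (setT :\ v) G) u w].
Proof.
move=> sG ns.
have uw : u != w.
  by apply/eqP => uw; apply: ns; rewrite -uw; apply: (same_of_sb (sb_single G u)); rewrite inE.
split => //.
case: (boolP [exists v, [&& v != u, v != w & ~~ connect (urel (setT :\ v) G) u w]]).
  by case/existsP => v /and3P[*]; exists v.
rewrite negb_exists => /forallP H; exfalso; apply: ns.
have Hs : forall v, v \in [set: T] -> v != u -> v != w -> connect (urel ([set: T] :\ v) G) u w.
  by move=> v _ vu vw; move: (H v); rewrite vu vw /= negbK.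
have [S [uS wS sb]] := block_ex uw (leqnn #|[set: T]|) (in_setT u) (in_setT w) sG Hs.
exact: same_of_sb sb uS wS.
Qed.

End Same.


Section Main.
Variable T : finType.
Notation edge := (T * T)%type.

Lemma aug_sub (E R Cur Out : {set edge}) : aug_loop E R Cur Out -> Cur \subset E -> Out \subset E.
Proof.
elim=> // C v w O _ vwE _ _ _ IH CE; apply: IH.
by rewrite subUset sub1set vwE CE.
Qed.

Lemma aug_grow (E R Cur Out : {set edge}) : aug_loop E R Cur Out -> Cur \subset Out.
Proof.
elim=> // C v w O _ _ _ _ _ IH; exact: subset_trans (subsetUr _ _) IH.
Qed.

Lemma bridge_sub (E : {set edge}) s Cur Out : bridge_loop E s Cur Out -> Cur \subset E -> Out \subset E.
Proof.
elim=> // t ts C M O a _ IH CE; apply: IH; exact: aug_sub a CE.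
Qed.

Lemma aug_stop_eq (E R Cur Out : {set edge}) : biconn setT (Cur :\: R) ->
  aug_loop E R Cur Out -> Out = Cur.
Proof.
move=> b H; move: b; case: H => // C v w O nb _ _ _ _ b.
by rewrite b in nb.
Qed.

Lemma branching (W0 : {set edge}) r : sconn setT W0 ->
  exists B : {set edge}, [/\ B \subset W0, reach B r & #|B| < #|T|].
Proof.
move=> sW.
have step : forall (B : {set edge}) (S : {set T}), B \subset W0 -> r \in S ->
    (forall e, e \in B -> e.2 \in S) -> S != setT ->
    exists a b, [/\ a \in S, b \notin S & (a, b) |: B \subset W0].
  move=> B S BW rS _ SnT.
  have [x xS] : exists x, x \notin S.
    by move: SnT; rewrite eqEsubset subsetT /= => /subsetPn[x _ xS]; exists x.
  have rS' : r \notin ~: S by rewrite inE rS.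
  have xS' : x \in ~: S by rewrite inE.
  have [a [b [ab aS bS]]] := cross (sconnP sW (in_setT r) (in_setT x)) rS' xS'.
  move: aS bS; rewrite !inE negbK => aS bS.
  exists a, b; split => //.
  by rewrite subUset sub1set -srelT ab BW.
have [B [BW cB rB]] := grow (P := fun (B : {set edge}) (S : {set T}) => B \subset W0)
  (sub0set _) step.
by exists B.
Qed.

Lemma aug_bound (E : {set edge}) t (Cur Mid W0 B : {set edge}) r :
  aug_loop E [set t] Cur Mid -> t \in Cur -> sconn setT W0 -> W0 \subset Cur :\: [set t] ->
  B \subset W0 -> reach B r ->
  #|Mid| + #|Lead B r (Mid :\: [set t])| <= #|Cur| + #|Lead B r (Cur :\: [set t])|.
Proof.
move=> H; elim: H => // C v w O _ vwE vwC ns _ IH tC sW WC BW rB.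
have tC' : t \in (v, w) |: C by rewrite in_setU1 tC orbT.
have WC' : W0 \subset ((v, w) |: C) :\: [set t].
  by apply: (subset_trans WC); apply: setSD; apply: subsetUr.
have := IH tC' sW WC' BW rB.
have sG : sconn setT (C :\: [set t]) by apply: sconn_mono WC sW.
have [vw [x [xv xw nc]]] := sep_of_not_same sG ns.
have vwt : (v, w) != t by apply/eqP => e; move: vwC; rewrite e tC.
have lt := lead_strict (G := C :\: [set t]) (G' := ((v, w) |: C) :\: [set t]) rB
  (subset_trans BW WC) (setSD _ (subsetUr _ _)) (u := v) (w := w) (v := x)
  _ _ _ nc.
rewrite cardsU1 vwC /= in lt *.
have := lt _ _ _; rewrite eq_sym xv eq_sym xw => /(_ isT isT).
rewrite !inE eqxx vwt /= => /(_ isT) lt'.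
move=> h; apply: (leq_trans h); rewrite (addnC 1) -addnA leq_add2l add1n; exact: lt'.
Qed.

Lemma ar1 (m c lm lc b n : nat) : m + lm <= c + lc -> n <= lm -> lc <= b + (n - 1) ->
  b < n -> 1 < n -> m + 2 <= c + n.
Proof. lia. Qed.

Lemma ar2 (o m c n k : nat) : o <= m + k * (n - 2) -> m + 2 <= c + n -> 1 < n ->
  o <= c + k.+1 * (n - 2).
Proof. nia. Qed.

Lemma bridge_bound (E U : {set edge}) s Cur Out : bridge_loop E s Cur Out ->
  (forall t, t \in s -> t \in Cur) -> U \subset Cur -> two_edge_connected U -> 1 < #|T| ->
  #|Out| <= #|Cur| + size s * (#|T| - 2).
Proof.
elim=> [C _ _ _ _|t ts C M O a _ IH tsC UC tU n2]; first by rewrite addn0.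
have tC : t \in C by apply: tsC; rewrite inE eqxx.
have CM := aug_grow a.
have tsM : forall t', t' \in ts -> t' \in M.
  by move=> t' ht'; apply: (subsetP CM); apply: tsC; rewrite inE ht' orbT.
have h := IH tsM (subset_trans UC CM) tU n2.
have sW : sconn setT (U :\ t).
  case/andP: tU => sU /forallP hU.
  case tU': (t \in U); first by move: (hU t); rewrite tU'.
  apply: sconn_mono sU; apply/subsetP => e eU; rewrite !inE eU andbT.
  by apply/eqP => et; move: tU'; rewrite -et eU.
have [B [BW rB cB]] := branching t.1 sW.
have WC : U :\ t \subset C :\: [set t] by apply: setSD.
have hb := aug_bound a tC sW WC BW rB.
have BM : B \subset M :\: [set t].
  exact: subset_trans BW (subset_trans WC (setSD _ CM)).
have m2 := ar1 hb (lead_ge rB BM n2) (lead_le B t.1 (C :\: [set t])) cB n2.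
exact: ar2 h m2 n2.
Qed.

End Main.


Lemma ar3 (u n i : nat) : u <= 4 * (n - 1) -> u <= i * (n - 1) + 5 * n.
Proof. nia. Qed.

Lemma ar4 (o u n i : nat) : o <= u + i * (n - 2) -> u <= 4 * (n - 1) -> o <= i * (n - 1) + 5 * n.
Proof. nia. Qed.

Lemma ar5 (o n i : nat) : o <= n * n -> n <= i -> o <= i * (n - 1) + 5 * n.
Proof. nia. Qed.

Lemma biconn_mono (T : finType) (S : {set T}) (F F' : {set T * T}) :
  F \subset F' -> biconn S F -> biconn S F'.
Proof.
move=> sF /andP[u1 /forallP u2]; apply/andP; split.
  apply/forallP => x; apply/implyP => xS; apply/forallP => y; apply/implyP => yS.
  move: u1 => /forallP/(_ x); rewrite xS /= => /forallP/(_ y); rewrite yS /=.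
  exact: connect_urel_mono (subxx _) sF.
apply/forallP => v; apply/implyP => vS; move: (u2 v); rewrite vS /= => u3.
apply/forallP => x; apply/implyP => xS; apply/forallP => y; apply/implyP => yS.
move: u3 => /forallP/(_ x); rewrite xS /= => /forallP/(_ y); rewrite yS /=.
exact: connect_urel_mono (subxx _) sF.
Qed.

Lemma card_ge_n (T : finType) (U : {set T * T}) : sconn setT U -> 1 < #|T| -> #|T| <= #|U|.
Proof.
move=> sU n2.
have E : [set e.1 | e in U] = [set: T].
  apply/setP => x; rewrite inE; apply/imsetP.
  have [y yx] : exists y, y != x.
    case: (pickP (fun y => y != x)) => [y yx|none]; first by exists y.
    move: n2; rewrite -cardsT (cardsD1 x) inE.
    have -> : [set: T] :\ x = set0.
      by apply/setP => z; rewrite !inE andbT; move: (none z) => /= ->.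
    by rewrite cards0.
  have xX : x \notin ~: [set x] by rewrite !inE eqxx.
  have yX : y \in ~: [set x] by rewrite !inE.
  have [a [b [ab aX bX]]] := cross (sconnP sU (in_setT x) (in_setT y)) xX yX.
  exists (a, b); first by rewrite -srelT.
  by move: aX; rewrite !inE negbK => /eqP ->.
by rewrite -cardsT -E leq_imset_card.
Qed.

Unset Implicit Arguments.

Theorem mainTheorem4 (T : finType) (E U Out : {set T * T}) :
  two_edge_sb E ->
  algA_run E U Out ->
  #|Out| <= #|bbridges U| * (#|T| - 1) + 5 * #|T|.
Proof.
move=> tE [mU alg].
have n3 : 3 <= #|T| by case/and3P: tE.
have n2 : 1 < #|T| by apply: leq_trans n3.
have /card_gt0P [r _] : 0 < #|[set: T]| by rewrite cardsT; apply: leq_trans n3.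
have bU := min2ec_bound r mU.
case: mU => UE tU minU.
case: alg => [[_ ->]|[ntU [F3 [s [a p bl]]]]].
  exact: ar3 bU.
case bb: (biconn setT U).
  have F3U : F3 = U by apply: aug_stop_eq a; rewrite setD0.
  subst F3.
  have sz : size s = #|bbridges U| by rewrite (perm_size p) -cardE.
  have ts : forall t, t \in s -> t \in U.
    by move=> t; rewrite (perm_mem p) mem_enum inE => /andP[].
  have := bridge_bound bl ts (subxx U) tU n2.
  rewrite sz => h; exact: ar4 h bU.
have bbU : bbridges U = U.
  apply/setP => e; rewrite inE; case eU: (e \in U) => //=.
  rewrite /strongly_biconnected /sbiconn negb_and; apply/orP; right.
  apply: contra (negbT bb); apply: biconn_mono.
  by apply/subsetP => f; rewrite inE => /andP[].
have OE : Out \subset E by apply: (bridge_sub bl); apply: (aug_sub a).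
have cO : #|Out| <= #|T| * #|T|.
  apply: (leq_trans (subset_leq_card OE)).
  by rewrite -card_prod max_card.
apply: ar5 cO _; rewrite bbU.
by apply: card_ge_n n2; case/andP: tU.
Qed.
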